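(* Let $k$ be a field and $A$ a $k$-algebra. The universal map of affine schemes $\mathrm{Spec}(A)\to\mathrm{Spec}(A^\circ)$ induces a homeomorphism $|\mathrm{Spec}(A^\circ)|\simeq\pi_0(|\mathrm{Spec}(A)|)$, where the set of connected components $\pi_0(|\mathrm{Spec}(A)|)$ carries the quotient topology from $|\mathrm{Spec}(A)|$ (which is profinite).
   Context: A Stone $k$-algebra is an object of the full subcategory $\mathrm{CAlg}_k^{\mathrm{Stone}}\subseteq\mathrm{CAlg}_k$ generated under filtered colimits by the algebras $k^S=\bigoplus_S k$, $S$ finite. The forgetful functor $\mathrm{CAlg}_k^{\mathrm{Stone}}\to\mathrm{CAlg}_k$ has a right adjoint $A\mapsto A^\circ$ (the pearl of $A$): $A^\circ\to A$ is terminal among $k$-algebra maps from Stone $k$-algebras to $A$. $|\mathrm{Spec}(A)|$ is the underlying Zariski topological space. *)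

(* Defs.v *)
From HB Require Import structures.
From mathcomp Require Import all_boot all_order all_algebra generic_quotient.
From mathcomp Require Import all_classical all_reals.
From mathcomp Require Import topology_structure connected separation_axioms
  compact quotient_topology.
Set Implicit Arguments. Unset Strict Implicit. Unset Printing Implicit Defensive.
Import Order.TTheory GRing.Theory.
Local Open Scope classical_set_scope.
Local Open Scope ring_scope.
Local Open Scope quotient_scope.

(* Commutative k-algebras (possibly the zero ring): a commutative ring with  *)
(* a ring morphism from k.                                                   *)
Record kalg (k : fieldType) := KAlg {
  kcar :> comPzRingType;
  kstr : {rmorphism k -> kcar} }.

Definition kalg_hom (k : fieldType) (B A : kalg k) (f : B -> A) : Prop :=
  [/\ forall x y : B, f (x + y) = f x + f y,
      forall x y : B, f (x * y) = f x * f y,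
      f 1 = 1 &
      forall c : k, f (kstr B c) = kstr A c].

(* B is isomorphic (as a k-algebra) to k^S = \prod_S k for a finite set S;  *)
(* finite sets are represented up to bijection by 'I_n.                     *)
Definition iso_kfin (k : fieldType) (B : kalg k) : Prop :=
  exists (n : nat) (phi : B -> {ffun 'I_n -> k}),
    [/\ bijective phi,
        forall x y : B, phi (x + y) = phi x + phi y,
        forall x y : B, phi (x * y) = phi x * phi y,
        phi 1 = 1 &
        forall c : k, phi (kstr B c) = [ffun => c]].

Record precat := Precat {
  Ob : Type;
  Hom : Ob -> Ob -> Type;
  idm : forall a, Hom a a;
  cmp : forall a b c, Hom b c -> Hom a b -> Hom a c;
  cmp_id_l : forall a b (u : Hom a b), cmp (idm b) u = u;
  cmp_id_r : forall a b (u : Hom a b), cmp u (idm a) = u;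
  cmp_assoc : forall a b c d (u : Hom a b) (v : Hom b c) (w : Hom c d),
      cmp w (cmp v u) = cmp (cmp w v) u }.

Definition filtered (C : precat) : Prop :=
  [/\ inhabited (Ob C),
      forall a b : Ob C, exists c, exists (u : Hom a c) (v : Hom b c), True &
      forall (a b : Ob C) (u v : Hom a b),
        exists c, exists w : Hom b c, cmp w u = cmp w v].

Definition kdiagram (k : fieldType) (C : precat) (D : Ob C -> kalg k)
  (F : forall a b, Hom a b -> D a -> D b) : Prop :=
  [/\ forall a b (u : Hom a b), kalg_hom (F a b u),
      forall a (x : D a), F a a (idm a) x = x &
      forall a b c (u : Hom a b) (v : Hom b c) (x : D a),
        F a c (cmp v u) x = F b c v (F a b u x)].

Definition kcocone (k : fieldType) (C : precat) (D : Ob C -> kalg k)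
  (F : forall a b, Hom a b -> D a -> D b) (B : kalg k)
  (g : forall a, D a -> B) : Prop :=
  (forall a, kalg_hom (g a)) /\
  (forall a b (u : Hom a b) (x : D a), g b (F a b u x) = g a x).

Definition kcolimit (k : fieldType) (C : precat) (D : Ob C -> kalg k)
  (F : forall a b, Hom a b -> D a -> D b) (B : kalg k)
  (g : forall a, D a -> B) : Prop :=
  kcocone F g /\
  forall (E : kalg k) (h : forall a, D a -> E), kcocone F h ->
    exists u : B -> E,
      [/\ kalg_hom u, (forall a (x : D a), u (g a x) = h a x) &
          forall u' : B -> E, kalg_hom u' ->
            (forall a (x : D a), u' (g a x) = h a x) -> forall x, u' x = u x].

Inductive Stone (k : fieldType) : kalg k -> Prop :=
| Stone_fin (B : kalg k) : iso_kfin B -> Stone B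
| Stone_colim (C : precat) (D : Ob C -> kalg k)
    (F : forall a b, Hom a b -> D a -> D b) (B : kalg k)
    (g : forall a, D a -> B) :
    filtered C -> kdiagram F -> kcolimit F g ->
    (forall a, Stone (D a)) -> Stone B.

(* eps : P -> A exhibits P as the pearl A° of A: P is Stone and eps is     *)
(* terminal among k-algebra maps from Stone k-algebras to A.               *)
Definition is_pearl (k : fieldType) (A P : kalg k) (eps : P -> A) : Prop :=
  [/\ Stone P, kalg_hom eps &
      forall (B : kalg k) (phi : B -> A), Stone B -> kalg_hom phi ->
        exists psi : B -> P,
          [/\ kalg_hom psi, (forall x, eps (psi x) = phi x) &
              forall psi' : B -> P, kalg_hom psi' ->
                (forall x, eps (psi' x) = phi x) -> forall x, psi' x = psi x]].

Record prime_ideal (R : comPzRingType) (p : set R) : Prop := {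
  pi_0 : p 0;
  pi_B : forall x y, p x -> p y -> p (x - y);
  pi_M : forall a x, p x -> p (a * x);
  pi_1 : ~ p 1;
  pi_P : forall x y, p (x * y) -> p x \/ p y }.

Definition Spec (R : comPzRingType) : Type := {p : set R | prime_ideal p}.

HB.instance Definition _ (R : comPzRingType) := gen_eqMixin (Spec R).
HB.instance Definition _ (R : comPzRingType) := gen_choiceMixin (Spec R).

Definition zopen (R : comPzRingType) : set_system (Spec R) :=
  [set U | exists S : set R, U = [set q : Spec R | ~ (S `<=` proj1_sig q)]].

Lemma zopenT (R : comPzRingType) : @zopen R setT.
Proof.
exists setT; apply/seteqP; split => q //= _ HS.
by apply: (pi_1 (proj2_sig q)); apply: HS.
Qed.

Lemma zopenI (R : comPzRingType) : setI_closed (@zopen R).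
Proof.
move=> U1 U2 [S1 ->] [S2 ->].
exists [set x | exists a b, [/\ S1 a, S2 b & x = a * b]].
apply/seteqP; split => q /=.
- move=> [H1 H2] H; apply: H1 => a Sa; apply: contrapT => na.
  apply: H2 => b Sb; apply: contrapT => nb.
  have : proj1_sig q (a * b) by apply: H; exists a, b.
  by case/(pi_P (proj2_sig q)).
- move=> H; split => Hs; apply: H => x [a [b [Sa Sb ->]]].
  + by rewrite mulrC; apply: (pi_M (proj2_sig q)); apply: Hs.
  + by apply: (pi_M (proj2_sig q)); apply: Hs.
Qed.

Lemma zopen_bigU (R : comPzRingType) (I : Type) (f : I -> set (Spec R)) :
  (forall i, @zopen R (f i)) -> @zopen R (\bigcup_i f i).
Proof.
move=> hf; have /choice [S hS] := hf.
exists (\bigcup_i S i); apply/seteqP; split => q /=.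
- move=> [i _]; rewrite hS /= => H H'; apply: H => x Sx; apply: H'; by exists i.
- move=> H; apply: contrapT => H'; apply: H => x [i _ Sx].
  apply: contrapT => nx; apply: H'; exists i => //; rewrite hS /= => H2.
  by apply: nx; apply: H2.
Qed.

HB.instance Definition _ (R : comPzRingType) :=
  isOpenTopological.Build (Spec R) (@zopenT R) (@zopenI R) (@zopen_bigU R).

Definition same_component (T : topologicalType) (x y : T) : bool :=
  `[< connected_component setT x y >].

Lemma same_component_refl (T : topologicalType) :
  reflexive (@same_component T).
Proof. by move=> x; apply/asboolP; apply: connected_component_refl. Qed.

Lemma same_component_sym (T : topologicalType) :
  symmetric (@same_component T).
Proof.
by move=> x y; apply/asboolP/asboolP => /connected_component_sym.
Qed.

Lemma same_component_trans (T : topologicalType) :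
  transitive (@same_component T).
Proof.
move=> y x z /asboolP Hxy /asboolP Hyz; apply/asboolP.
exact: connected_component_trans Hxy Hyz.
Qed.

Definition component_rel (T : topologicalType) : equiv_rel T :=
  EquivRel (@same_component T) (@same_component_refl T)
    (@same_component_sym T) (@same_component_trans T).

Definition pi0 (T : topologicalType) : topologicalType :=
  quotient_topology {eq_quot (@component_rel T)}.

Definition pi0_proj (T : topologicalType) : T -> pi0 T :=
  \pi_{eq_quot (@component_rel T)}.

Definition profinite (T : topologicalType) : Prop :=
  [/\ compact [set: T], hausdorff_space T & totally_disconnected [set: T]].

Definition homeomorphism (S T : topologicalType) (h : S -> T) : Prop :=
  continuous h /\
  exists g : T -> S, [/\ cancel h g, cancel g h & continuous g].

(* Main.v *)
Require Import Defs.
From HB Require Import structures.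
From mathcomp Require Import all_boot all_order all_algebra generic_quotient finmap.
From mathcomp Require Import all_classical all_reals.
From mathcomp Require Import topology_structure connected separation_axioms
  compact quotient_topology subspace_topology.
From mathcomp Require Import ring.
Set Implicit Arguments. Unset Strict Implicit. Unset Printing Implicit Defensive.
Import GRing.Theory.
Local Open Scope classical_set_scope.
Local Open Scope ring_scope.

Definition idem (R : comPzRingType) (e : R) := e * e = e.

Lemma idem0 (R : comPzRingType) : idem (0 : R).
Proof. by rewrite /idem mulr0. Qed.
Lemma idem1 (R : comPzRingType) : idem (1 : R).
Proof. by rewrite /idem mulr1. Qed.
Lemma idemM (R : comPzRingType) (e f : R) : idem e -> idem f -> idem (e * f).
Proof. rewrite /idem => he hf. by rewrite mulrACA he hf. Qed.
Lemma idemC (R : comPzRingType) (e : R) : idem e -> idem (1 - e).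
Proof. rewrite /idem => he. by rewrite mulrBl mul1r mulrBr mulr1 he subrr subr0. Qed.

Lemma hom0 (k : fieldType) (B A : kalg k) (f : B -> A) : kalg_hom f -> f 0 = 0.
Proof.
case=> hD _ _ _; have h := hD 0 0; rewrite addr0 in h.
by apply: (@addrI _ (f 0)); rewrite addr0 -h.
Qed.
Lemma homN (k : fieldType) (B A : kalg k) (f : B -> A) x : kalg_hom f -> f (- x) = - f x.
Proof.
move=> hf; have := hom0 hf; case: hf => hD _ _ _.
move=> h0; apply: (@addrI _ (f x)); rewrite -hD !subrr h0 //.
Qed.
Lemma homB (k : fieldType) (B A : kalg k) (f : B -> A) x y : kalg_hom f -> f (x - y) = f x - f y.
Proof. by move=> hf; have [hD _ _ _] := hf; rewrite hD homN. Qed.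
Lemma hom_idem (k : fieldType) (B A : kalg k) (f : B -> A) e : kalg_hom f -> idem e -> idem (f e).
Proof. by case=> _ hM _ _; rewrite /idem -hM => ->. Qed.
Lemma hom_comp (k : fieldType) (B C A : kalg k) (f : B -> C) (g : C -> A) :
  kalg_hom f -> kalg_hom g -> kalg_hom (g \o f).
Proof.
case=> fD fM f1 fk [gD gM g1 gk]; split => /=.
- by move=> x y; rewrite fD gD.
- by move=> x y; rewrite fM gM.
- by rewrite f1 g1.
- by move=> c; rewrite fk gk.
Qed.
Lemma hom_id (k : fieldType) (B : kalg k) : kalg_hom (@id B).
Proof. by split. Qed.

Inductive combI (k : fieldType) (B : kalg k) : B -> Prop :=
| comb0 : combI 0
| combS (c : k) (e x : B) : idem e -> combI x -> combI (kstr B c * e + x).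

Lemma combD (k : fieldType) (B : kalg k) (x y : B) : combI x -> combI y -> combI (x + y).
Proof.
elim=> [|c e x' he _ IH] hy; first by rewrite add0r.
by rewrite -addrA; apply: combS => //; apply: IH.
Qed.
Lemma combK (k : fieldType) (B : kalg k) (c : k) (x : B) : combI x -> combI (kstr B c * x).
Proof.
elim=> [|d e x' he _ IH]; first by rewrite mulr0; apply: comb0.
by rewrite mulrDr mulrA -rmorphM; apply: combS.
Qed.
Lemma combMe (k : fieldType) (B : kalg k) (f : B) (x : B) : idem f -> combI x -> combI (x * f).
Proof.
move=> hf; elim=> [|d e x' he _ IH]; first by rewrite mul0r; apply: comb0.
by rewrite mulrDl -mulrA; apply: combS => //; apply: idemM.
Qed.
Lemma combM (k : fieldType) (B : kalg k) (x y : B) : combI x -> combI y -> combI (x * y).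
Proof.
move=> hx; elim=> [|d e y' he _ IH]; first by rewrite mulr0; apply: comb0.
rewrite mulrDr; apply: combD => //.
by rewrite mulrCA; apply: combK; apply: combMe.
Qed.
Lemma combk (k : fieldType) (B : kalg k) (c : k) : combI (kstr B c).
Proof. by rewrite -[kstr B c]addr0 -[kstr B c]mulr1; apply: combS; [apply: idem1|apply: comb0]. Qed.
Lemma comb1 (k : fieldType) (B : kalg k) : combI (1 : B).
Proof. by rewrite -(rmorph1 (kstr B)); apply: combk. Qed.
Lemma combN (k : fieldType) (B : kalg k) (x : B) : combI x -> combI (- x).
Proof. by move=> hx; rewrite -mulN1r -(rmorphN1 (kstr B)); apply: combK. Qed.
Lemma comb_hom (k : fieldType) (B A : kalg k) (f : B -> A) (x : B) :
  kalg_hom f -> combI x -> combI (f x).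
Proof.
move=> hf; elim=> [|c e x' he _ IH]; first by rewrite (hom0 hf); apply: comb0.
have [hD hM _ hk] := hf.
by rewrite hD hM hk; apply: combS => //; apply: hom_idem.
Qed.


Lemma iso_comb (k : fieldType) (B : kalg k) : iso_kfin B -> forall x : B, combI x.
Proof.
case=> n [phi [[psi phiK psiK] pD pM p1 pk]] x.
have qD a b : psi (a + b) = psi a + psi b.
  by apply: (can_inj phiK); rewrite pD !psiK.
have qM a b : psi (a * b) = psi a * psi b.
  by apply: (can_inj phiK); rewrite pM !psiK.
have q0 : psi 0 = 0.
  by have h := qD 0 0; rewrite addr0 in h; apply: (@addrI _ (psi 0)); rewrite addr0 -h.
have qk c : psi [ffun => c] = kstr B c by rewrite -pk phiK.
pose d (i : 'I_n) : {ffun 'I_n -> k} := [ffun j => (j == i)%:R].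
have dec : phi x = \sum_(i < n) [ffun => phi x i] * d i.
  apply/ffunP => j; rewrite sum_ffunE (bigD1 j) //= big1 ?addr0 => [|i /negPf ij].
    by rewrite !ffunE eqxx mulr1.
  by rewrite !ffunE eq_sym ij mulr0.
rewrite -[x]phiK dec (big_morph psi qD q0).
apply: big_ind => //; [exact: comb0 | exact: combD |].
move=> i _; rewrite qM qk -[_ * _]addr0; apply: combS; last exact: comb0.
rewrite /idem -qM; congr psi; apply/ffunP=> j; rewrite !ffunE.
by case: (j == i); rewrite /= ?mulr1 ?mulr0.
Qed.

Definition combp (k : fieldType) (B : kalg k) : {pred B} := fun x => `[< combI x >].
Arguments combp {k} B.

Lemma combpP (k : fieldType) (B : kalg k) (x : B) : (x \in combp B) <-> combI x.
Proof. by rewrite unfold_in; split => [/asboolP|?]; [|apply/asboolP]. Qed.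

Lemma combp_closed (k : fieldType) (B : kalg k) : GRing.subring_closed (combp B).
Proof.
split.
- by apply/combpP; apply: comb1.
- by move=> x y /combpP hx /combpP hy; apply/combpP; apply: combD => //; apply: combN.
- by move=> x y /combpP hx /combpP hy; apply/combpP; apply: combM.
Qed.

Definition combT (k : fieldType) (B : kalg k) := {x : B | x \in combp B}.
HB.instance Definition _ (k : fieldType) (B : kalg k) := [isSub for (@sval B (fun x => x \in combp B)) : combT B -> B].
HB.instance Definition _ (k : fieldType) (B : kalg k) := [Choice of combT B by <:].
HB.instance Definition _ (k : fieldType) (B : kalg k) :=
  GRing.SubChoice_isSubComPzRing.Build B (combp B) (combT B) (combp_closed B).

Check fun (k : fieldType) (B : kalg k) => (combT B : comPzRingType).

Definition kS (k : fieldType) (B : kalg k) (c : k) : combT B :=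
  exist _ (kstr B c) (proj2 (combpP _) (combk B c)).

Lemma kS_zmod (k : fieldType) (B : kalg k) : zmod_morphism (@kS k B).
Proof. by move=> x y; apply: val_inj; rewrite /= !rmorphB. Qed.
Lemma kS_mon (k : fieldType) (B : kalg k) : monoid_morphism (@kS k B).
Proof. by split; [apply: val_inj; rewrite /= rmorph1 | move=> x y; apply: val_inj; rewrite /= rmorphM]. Qed.

HB.instance Definition _ (k : fieldType) (B : kalg k) :=
  GRing.isZmodMorphism.Build k (combT B) (@kS k B) (kS_zmod B).
HB.instance Definition _ (k : fieldType) (B : kalg k) :=
  GRing.isMonoidMorphism.Build k (combT B) (@kS k B) (kS_mon B).

Definition combA (k : fieldType) (B : kalg k) : kalg k := @KAlg k (combT B) (@kS k B).

Lemma val_hom (k : fieldType) (B : kalg k) : kalg_hom (fun x : combA B => val x : B).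
Proof.
split => /= [x y|x y||c]; by rewrite ?rmorphD ?rmorphM ?rmorph1.
Qed.

Lemma stone_comb (k : fieldType) (B : kalg k) : Stone B -> forall x : B, combI x.
Proof.
elim=> [B0 /iso_comb //| C D F B0 g filt diag [[gh gc] univ] _ IH] x.
pose h a (y : D a) : combA B0 := exist _ (g a y) (proj2 (combpP _) (comb_hom (gh a) (IH a y))).
have hh : kcocone F h.
  split => [a|a b u y]; last by apply: val_inj => /=; rewrite gc.
  have [gD gM g1 gk] := gh a.
  split.
  - by move=> y z; apply: val_inj => /=; rewrite gD.
  - by move=> y z; apply: val_inj => /=; rewrite gM.
  - by apply: val_inj => /=; rewrite g1.
  - by move=> c; apply: val_inj; rewrite /= gk.
have [u [uh ug _]] := univ _ h hh.
have [u0 [_ _ u0U]] := univ _ g (conj gh gc).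
have e1 := u0U (fun x => val (u x)) (hom_comp uh (val_hom B0)).
have e2 := u0U id (hom_id B0).
have -> : x = val (u x).
  rewrite e1; last by move=> a y; rewrite /= ug.
  by rewrite -e2.
by apply/combpP; apply: valP.
Qed.


Record ideal (R : comPzRingType) (J : set R) : Prop := {
  id0 : J 0;
  idB : forall x y, J x -> J y -> J (x - y);
  idM : forall a x, J x -> J (a * x) }.

Definition gen (R : comPzRingType) (S : set R) : set R :=
  fun x => forall J, ideal J -> S `<=` J -> J x.

Lemma gen_ideal (R : comPzRingType) (S : set R) : ideal (gen S).
Proof.
split.
- by move=> J hJ _; apply: id0.
- by move=> x y hx hy J hJ SJ; apply: idB => //; [apply: hx|apply: hy].
- by move=> a x hx J hJ SJ; apply: idM => //; apply: hx.
Qed.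

Lemma sub_gen (R : comPzRingType) (S : set R) : S `<=` gen S.
Proof. by move=> x Sx J _ SJ; apply: SJ. Qed.

Lemma idN (R : comPzRingType) (J : set R) x : ideal J -> J x -> J (- x).
Proof. by move=> hJ hx; rewrite -sub0r; apply: idB => //; apply: id0. Qed.
Lemma idD (R : comPzRingType) (J : set R) x y : ideal J -> J x -> J y -> J (x + y).
Proof. by move=> hJ hx hy; rewrite -[y]opprK; apply: idB => //; apply: idN. Qed.
Lemma idMr (R : comPzRingType) (J : set R) a x : ideal J -> J x -> J (x * a).
Proof. by move=> hJ hx; rewrite mulrC; apply: idM. Qed.

Lemma prime_ideal_ideal (R : comPzRingType) (p : set R) : prime_ideal p -> ideal p.
Proof. by case=> *; split. Qed.

Lemma prime_idem (R : comPzRingType) (p : set R) (e : R) : prime_ideal p -> idem e ->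
  (p e \/ p (1 - e)) /\ ~ (p e /\ p (1 - e)).
Proof.
move=> hp he; split.
  apply: (pi_P hp); rewrite mulrBr mulr1 he subrr; exact: (pi_0 hp).
case=> h1 h2; apply: (pi_1 hp).
have -> : (1 : R) = (1 - e) - (- e) by rewrite opprK subrK.
by apply: (pi_B hp) => //; apply: idN => //; apply: prime_ideal_ideal.
Qed.

(* ideal generated by a join-closed set of idempotents *)
Definition idJ (R : comPzRingType) (T : set R) : set R :=
  fun z => exists e, T e /\ z * e = z.

Lemma idJ_ideal (R : comPzRingType) (T : set R) : T 0 ->
  (forall e f, T e -> T f -> T (e + f - e * f)) -> (forall e, T e -> idem e) ->
  ideal (idJ T).
Proof.
move=> T0 Tj Ti; split.
- by exists 0; rewrite mul0r.
- move=> x y [e [Te he]] [f [Tf hf]]; exists (e + f - e * f); split; first exact: Tj.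
  have ee := Ti _ Te; have ff := Ti _ Tf; rewrite /idem in ee ff.
  have hx : x * (e + f - e * f) = x.
    by rewrite mulrBr mulrDr mulrA he; ring.
  have hy : y * (e + f - e * f) = y.
    rewrite mulrBr mulrDr [e * f]mulrC mulrA hf.
    by ring.
  by rewrite mulrBl hx hy.
- by move=> a x [e [Te he]]; exists e; split => //; rewrite -mulrA he.
Qed.

Definition good (R : comPzRingType) (S : set R) (s : R) (J : set R) :=
  [/\ ideal J, S `<=` J & forall n, ~ J (s ^+ n)].

Lemma Krull (R : comPzRingType) (S : set R) (s : R) :
  (forall n, ~ gen S (s ^+ n)) -> exists p : Spec R, S `<=` sval p /\ ~ sval p s.
Proof.
move=> hS.
pose PP := fun J : set R => J = set0 \/ good S s J.
have [M [PM Mmax]] : exists A, PP A /\ forall B, A `<` B -> ~ PP B.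
  apply: Zorn_bigcup => F FP Ftot.
  case: (pselect (exists J, F J /\ good S s J)) => [[J0 [FJ0 gJ0]]|nF]; last first.
    left; apply/seteqP; split => // x [J FJ Jx].
    have [J0|gJ] := FP _ FJ; first by rewrite J0 in Jx.
    by exfalso; apply: nF; exists J.
  right.
  have FJ J : F J -> J `<=` J0 \/ J0 `<=` J by move=> FJ; apply: Ftot.
  have good_or_0 J : F J -> J = set0 \/ good S s J by move=> /FP.
  split.
  - split.
    + by exists J0 => //; case: gJ0 => [[]].
    + move=> x y [J1 F1 x1] [J2 F2 y2].
      have [e1|g1] := good_or_0 _ F1; first by rewrite e1 in x1.
      have [e2|g2] := good_or_0 _ F2; first by rewrite e2 in y2.
      have [s12|s21] := Ftot _ _ F1 F2.
      * by exists J2 => //; case: g2 => -[_ hB _] _ _; apply: hB => //; apply: s12.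
      * by exists J1 => //; case: g1 => -[_ hB _] _ _; apply: hB => //; apply: s21.
    + move=> a x [J1 F1 x1]; exists J1 => //.
      have [e1|g1] := good_or_0 _ F1; first by rewrite e1 in x1.
      by case: g1 => -[_ _ hM] _ _; apply: hM.
  - by move=> x Sx; exists J0 => //; case: gJ0 => _ hS0 _; apply: hS0.
  - move=> n [J1 F1 x1].
    have [e1|g1] := good_or_0 _ F1; first by rewrite e1 in x1.
    by case: g1 => _ _ h; apply: (h n).
have gM : good S s M.
  case: PM => // M0; exfalso; apply: (Mmax (gen S)); last first.
    right; split; [exact: gen_ideal|exact: sub_gen|exact: hS].
  rewrite M0; split; first exact: sub0set.
  by move=> h; apply: (h 0); apply: id0; apply: gen_ideal.
case: gM => iM SM nM.
have ext x : ~ M x -> exists n m r, M m /\ s ^+ n = m + r * x.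
  move=> nx; pose Jx := fun z => exists m r, M m /\ z = m + r * x.
  have iJ : ideal Jx.
    split.
    - by exists 0, 0; split; [apply: id0|rewrite mul0r addr0].
    - move=> a b [m [r [Mm ->]]] [m' [r' [Mm' ->]]]; exists (m - m'), (r - r').
      by split; [apply: idB|ring].
    - move=> a z [m [r [Mm ->]]]; exists (a * m), (a * r).
      by split; [apply: idM|ring].
  have MJ : M `<=` Jx by move=> z Mz; exists z, 0; rewrite mul0r addr0.
  have : ~ PP Jx.
    apply: Mmax; split => // h; apply: nx; apply: h.
    by exists 0, 1; rewrite mul1r add0r; split => //; apply: id0.
  move=> nP; apply: contrapT => hn; apply: nP; right; split => //.
    by move=> z Sz; apply: MJ; apply: SM.
  move=> n [m [r [Mm e]]]; apply: hn; exists n, m, r; split => //.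
have pM : prime_ideal M.
  split.
  - exact: id0.
  - exact: idB.
  - exact: idM.
  - by move=> h; apply: (nM 0); rewrite expr0.
  - move=> x y Mxy; apply: contrapT => /not_orP [nx ny].
    have [n [m [r [Mm e1]]]] := ext _ nx.
    have [n' [m' [r' [Mm' e2]]]] := ext _ ny.
    apply: (nM (n + n')); rewrite exprD e1 e2.
    have -> : (m + r * x) * (m' + r' * y) = m * (m' + r' * y) + (r * x * m' + (r * r') * (x * y)) by ring.
    apply: idD => //; first by apply: idMr.
    apply: idD => //; first by apply: idM.
    by apply: idM.
exists (exist _ M pM); split => //=.
by move=> h; apply: (nM 1); rewrite expr1.
Qed.


Lemma binom_split (R : comPzRingType) (X Y : R) m : forall a b, (a + b <= m.+1)%N ->
  exists u v, (X + Y) ^+ m = X ^+ a * u + Y ^+ b * v.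
Proof.
elim: m => [|m IH] a b hab.
  case: a hab => [|a] hab; first by exists 1, 0; rewrite !expr0 mulr1 mulr0 addr0.
  case: b hab => [|b] hab; last by rewrite addnS ltnS ltn0 in hab.
  by exists 0, 1; rewrite !expr0 mulr0 mulr1 add0r.
case: a hab => [|a] hab; first by exists ((X + Y) ^+ m.+1), 0; rewrite expr0 mul1r mulr0 addr0.
case: b hab => [|b] hab; first by exists 0, ((X + Y) ^+ m.+1); rewrite expr0 mul1r mulr0 add0r.
have h1 : (a + b.+1 <= m.+1)%N by rewrite addSn ltnS in hab.
have h2 : (a.+1 + b <= m.+1)%N by rewrite addnS ltnS in hab.
have [u [v e1]] := IH a b.+1 h1.
have [u' [v' e2]] := IH a.+1 b h2.
exists (u + Y * u'), (X * v + v').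
rewrite exprS mulrDl {1}e1 e2 !exprS; ring.
Qed.

Lemma idem_expr (R : comPzRingType) (E : R) n : idem E -> E ^+ n.+1 = E.
Proof. by move=> hE; elim: n => [|n IH]; rewrite ?expr1 // exprS IH hE. Qed.

Lemma gen_sub_prime (R : comPzRingType) (S : set R) (p : set R) :
  prime_ideal p -> S `<=` p -> gen S `<=` p.
Proof. by move=> hp Sp x hx; apply: hx => //; apply: prime_ideal_ideal. Qed.

Definition Iset (R : comPzRingType) (q : Spec R) : set R := [set e | idem e /\ sval q e].

Definition Zset (R : comPzRingType) (q : Spec R) : set (Spec R) :=
  [set r | Iset q `<=` sval r].

Lemma Iset_ideal (R : comPzRingType) (q : Spec R) : ideal (idJ (Iset q)).
Proof.
have hq := proj2_sig q.
apply: idJ_ideal.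
- by split; [apply: idem0|apply: (pi_0 hq)].
- move=> e f [he qe] [hf qf]; split.
    rewrite /idem in he hf *.
    have -> : (e + f - e * f) * (e + f - e * f) =
      e * e + f * f + (e * e) * (f * f) + (e * f) *+ 2 - ((e * e) * f) *+ 2 - (e * (f * f)) *+ 2 by ring.
    rewrite he hf; ring.
  apply: (pi_B hq); last by apply: (pi_M hq).
  rewrite -[f]opprK; apply: (pi_B hq) => //.
  by rewrite -sub0r; apply: (pi_B hq) => //; apply: (pi_0 hq).
- by move=> e [].
Qed.

Lemma Iset_idJ (R : comPzRingType) (q : Spec R) : Iset q `<=` idJ (Iset q).
Proof. by move=> e [he qe]; exists e; split. Qed.


Lemma open_zopen (R : comPzRingType) (U : set (Spec R)) :
  open U -> exists S : set R, U = [set q : Spec R | ~ (S `<=` sval q)].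
Proof. by []. Qed.

Lemma closed_zclosed (R : comPzRingType) (C : set (Spec R)) :
  closed C -> exists S : set R, C = [set q : Spec R | S `<=` sval q].
Proof.
rewrite -openC => /open_zopen [S hS]; exists S.
apply/seteqP; split => r.
  move=> Cr; apply: contrapT => nS.
  by have : (~` C) r by rewrite hS.
move=> Sr; apply: contrapT => nC.
by have : (~` C) r by []; rewrite hS.
Qed.

Lemma gen_decomp (R : comPzRingType) (I0 T T2 : set R) : ideal I0 ->
  gen (I0 `|` T `|` T2) `<=`
  [set z | exists i x y, [/\ I0 i, gen T x, gen T2 y & z = i + x + y]].
Proof.
move=> hI z hz; have gT := gen_ideal T; have gT2 := gen_ideal T2.
apply: hz.
- split.
  + by exists 0, 0, 0; split; rewrite ?addr0 //; [exact: (id0 hI)|exact: (id0 gT)|exact: (id0 gT2)].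
  + move=> a b [i [x [y [hi hx hy ->]]]] [i' [x' [y' [hi' hx' hy' ->]]]].
    exists (i - i'), (x - x'), (y - y'); split; [exact: (idB hI)|exact: (idB gT)|exact: (idB gT2)|ring].
  + move=> a b [i [x [y [hi hx hy ->]]]].
    exists (a * i), (a * x), (a * y); split; [exact: (idM hI)|exact: (idM gT)|exact: (idM gT2)|ring].
- move=> w [[Iw|Tw]|T2w].
  + by exists w, 0, 0; split; rewrite ?addr0 //; [exact: (id0 gT)|exact: (id0 gT2)].
  + by exists 0, w, 0; split; rewrite ?addr0 ?add0r //; [exact: (id0 hI)|exact: sub_gen|exact: (id0 gT2)].
  + by exists 0, 0, w; split; rewrite ?add0r //; [exact: (id0 hI)|exact: (id0 gT)|exact: sub_gen].
Qed.

Lemma gen_mono (R : comPzRingType) (S S' : set R) : S `<=` S' -> gen S `<=` gen S'.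
Proof. by move=> SS x hx J hJ S'J; apply: hx => // y Sy; apply: S'J; apply: SS. Qed.

Lemma Zset_connected (R : comPzRingType) (q : Spec R) : connected (Zset q).
Proof.
move=> B [r0 Br0] [U /open_zopen [T2 ->] BU] [C /closed_zclosed [T ->] BC].
have hIq := Iset_ideal q.
have inB r : Zset q r -> T `<=` sval r -> B r.
  by move=> Zr Tr; rewrite BC.
have notB r : Zset q r -> ~ B r -> T2 `<=` sval r.
  move=> Zr nB; apply: contrapT => nT2; apply: nB; rewrite BU; split => //.
have BZ r : B r -> Zset q r by rewrite BU => -[].
have BT r : B r -> T `<=` sval r by rewrite BC => -[].
have BT2 r : B r -> ~ T2 `<=` sval r by rewrite BU => -[].
have one : gen (Iset q `|` T `|` T2) 1.
  apply: contrapT => n1.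
  have [p [hp _]] : exists p : Spec R, (Iset q `|` T `|` T2) `<=` sval p /\ ~ sval p 1.
    by apply: Krull => n; rewrite expr1n.
  have Zp : Zset q p by move=> e he; apply: hp; left; left.
  have Bp : B p by apply: inB => // e he; apply: hp; left; right.
  by apply: (BT2 _ Bp) => e he; apply: hp; right.
have one' : gen (idJ (Iset q) `|` T `|` T2) 1.
  apply: gen_mono one => w [[hw|hw]|hw]; [left; left; exact: Iset_idJ|left; right|right] => //.
have [i [x [y [hi hx hy e1]]]] := gen_decomp hIq one'.
have [n hn] : exists n, gen (Iset q) ((x * y) ^+ n).
  apply: contrapT => hn.
  have [p [hp nxy]] : exists p : Spec R, Iset q `<=` sval p /\ ~ sval p (x * y).
    by apply: Krull => n hn'; apply: hn; exists n.
  have pp := proj2_sig p.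
  case: (pselect (B p)) => [Bp|nBp].
    apply: nxy; rewrite mulrC; apply: (pi_M pp).
    exact: (gen_sub_prime pp (BT _ Bp)).
  apply: nxy; apply: (pi_M pp).
  exact: (gen_sub_prime pp (notB _ hp nBp)).
have hn' : idJ (Iset q) ((x * y) ^+ n.+1).
  by rewrite exprS; apply: idM => //; apply: hn => //; apply: Iset_idJ.
have [ei [[hei qei] iei]] := hi.
have [ej [[hej qej] jej]] := hn'.
set N := n.+1 in hn' jej.
pose e := ei + ej - ei * ej.
have [he qe] : Iset q e.
  have := id0 hIq; have := idB hIq.
  move=> _ _; split.
    rewrite /idem /e; rewrite /idem in hei hej.
    have -> : (ei + ej - ei * ej) * (ei + ej - ei * ej) =
      ei * ei + ej * ej + (ei * ei) * (ej * ej) + (ei * ej) *+ 2 - ((ei * ei) * ej) *+ 2 - (ei * (ej * ej)) *+ 2 by ring.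
    rewrite hei hej; ring.
  have hq := proj2_sig q.
  apply: (pi_B hq); last by apply: (pi_M hq).
  rewrite -[ej]opprK; apply: (pi_B hq) => //.
  by rewrite -sub0r; apply: (pi_B hq) => //; apply: (pi_0 hq).
have ie : i * e = i by rewrite /e mulrBr mulrDr mulrA iei; ring.
have je : (x * y) ^+ N * e = (x * y) ^+ N.
  by rewrite /e mulrBr mulrDr [ei * ej]mulrC mulrA jej; ring.
pose E := 1 - e.
have hE : idem E by apply: idemC.
pose X := x * E; pose Y := y * E.
have XYE : X + Y = E.
  have : (i + x + y) * E = E by rewrite -e1 mul1r.
  by rewrite /X /Y /E !mulrDl mulrBr mulr1 ie subrr add0r.
have XYN : (X * Y) ^+ N = 0.
  have -> : X * Y = (x * y) * (E * E) by rewrite /X /Y; ring.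
  by rewrite hE exprMn (idem_expr _ hE) /E mulrBr mulr1 je subrr.
have [u [v hb]] := @binom_split _ X Y (N + N) N N (leqnSn _).
have NN : (N + N = (n + N).+1)%N by rewrite addSn.
rewrite XYE NN (idem_expr _ hE) in hb.
pose f := X ^+ N * u; pose g := Y ^+ N * v.
have fg : f * g = 0 by rewrite /f /g mulrACA -exprMn XYN mul0r.
have XE : X * E = X by rewrite /X -mulrA hE.
have XNE : X ^+ N * E = X ^+ N by rewrite /N exprSr -mulrA XE.
have fE : f * E = f by rewrite /f mulrAC XNE.
have hf : idem f.
  have : f * (f + g) = f by rewrite -hb fE.
  by rewrite mulrDr fg addr0.
have fT : gen T f.
  have -> : f = x * (E * X ^+ n * u) by rewrite /f /N exprS /X; ring.
  exact: (idMr _ (gen_ideal T) hx).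
have gT2 : gen T2 g.
  have -> : g = y * (E * Y ^+ n * v) by rewrite /g /N exprS /Y; ring.
  exact: (idMr _ (gen_ideal T2) hy).
have hq := proj2_sig q.
case: (pselect (sval q f)) => [qf|nqf].
  apply/seteqP; split => r; first exact: BZ.
  move=> Zr; apply: contrapT => nBr.
  have pr := proj2_sig r.
  have gr : sval r g := gen_sub_prime pr (notB r Zr nBr) gT2.
  have fr : sval r f by apply: Zr.
  have er : sval r e by apply: Zr.
  apply: (pi_1 pr).
  have -> : (1 : R) = f + g + e by rewrite -hb /E subrK.
  by apply: idD => //; [apply: prime_ideal_ideal|apply: idD => //; apply: prime_ideal_ideal].
exfalso.
have [[//|q1f] _] := prime_idem hq hf.
have pr := proj2_sig r0.
have f1r : sval r0 (1 - f) by apply: (BZ _ Br0); split => //; apply: idemC.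
have fr : sval r0 f := gen_sub_prime pr (BT _ Br0) fT.
apply: (pi_1 pr).
have -> : (1 : R) = (1 - f) + f by rewrite subrK.
by apply: idD => //; apply: prime_ideal_ideal.
Qed.


Lemma Spec_cover_compact (R : comPzRingType) : cover_compact [set: Spec R].
Proof.
move=> I D f fo fcov.
have /choice [S hS] : forall i, exists S : set R, D i -> f i = [set q : Spec R | ~ (S `<=` sval q)].
  move=> i; case: (pselect (D i)) => [Di|nDi].
    by have [S ->] := open_zopen (fo i Di); exists S.
  by exists set0.
pose W := fun D' : set I => fun z : R => exists2 i, D' i & S i z.
have noW : gen (W D) 1.
  apply: contrapT => h.
  have [p [hp _]] : exists p : Spec R, W D `<=` sval p /\ ~ sval p 1.
    by apply: Krull => n; rewrite expr1n.
  have [i Di fip] := fcov p Logic.I.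
  by move: fip; rewrite (hS i Di) /=; apply => z Sz; apply: hp; exists i.
pose Fin := fun z : R => exists2 D' : {fset I}, {subset D' <= D} & gen (W [set` D']) z.
have iFin : ideal Fin.
  split.
  - by exists fset0 => //; apply: (id0 (gen_ideal _)).
  - move=> x y [D1 s1 h1] [D2 s2 h2]; exists (D1 `|` D2)%fset.
      by move=> i; rewrite in_fsetU => /orP [/s1|/s2].
    apply: (idB (gen_ideal _)).
      by apply: gen_mono h1 => z [i D1i Siz]; exists i => //=; rewrite in_fsetU D1i.
    by apply: gen_mono h2 => z [i D2i Siz]; exists i => //=; rewrite in_fsetU D2i orbT.
  - by move=> a x [D1 s1 h1]; exists D1 => //; apply: (idM (gen_ideal _)).
have [D' sD' h1] : Fin 1.
  apply: noW => // z [i Di Siz]; exists [fset i]%fset.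
    by move=> j; rewrite in_fset1 => /eqP ->; apply/mem_set.
  by apply: sub_gen; exists i => //=; rewrite in_fset1.
exists D' => // r _; apply: contrapT => nr.
have pr := proj2_sig r.
apply: (pi_1 pr); apply: (gen_sub_prime pr) h1.
move=> z [i D'i Siz]; apply: contrapT => nz; apply: nr; exists i => //.
rewrite (hS i); last by have := sD' _ D'i; rewrite inE.
by move=> /= h; apply: nz; apply: h.
Qed.

Definition pSpec (R : comPzRingType) (t : Spec R) : Type := Spec R.
HB.instance Definition _ (R : comPzRingType) (t : Spec R) := Topological.copy (pSpec t) (Spec R).
HB.instance Definition _ (R : comPzRingType) (t : Spec R) := isPointed.Build (pSpec t) t.

Lemma Spec_compact (R : comPzRingType) : compact [set: Spec R].
Proof.
case: (pselect (exists t : Spec R, True)) => [[t _]|nt].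
  have := @Spec_cover_compact R.
  by rewrite -(@compact_cover (pSpec t)).
have -> : [set: Spec R] = set0 by apply/seteqP; split => // x _; apply: nt; exists x.
exact: compact0.
Qed.


Definition kd (k : fieldType) (c : k) : (k * k)%type := (c, c).
Lemma kd_zmod (k : fieldType) : zmod_morphism (@kd k).
Proof. by []. Qed.
Lemma kd_mon (k : fieldType) : monoid_morphism (@kd k).
Proof. by []. Qed.
HB.instance Definition _ (k : fieldType) :=
  GRing.isZmodMorphism.Build k (k * k)%type (@kd k) (@kd_zmod k).
HB.instance Definition _ (k : fieldType) :=
  GRing.isMonoidMorphism.Build k (k * k)%type (@kd k) (@kd_mon k).
Definition K2 (k : fieldType) : kalg k := @KAlg k (k * k)%type (@kd k).

Lemma K2_stone (k : fieldType) : Stone (K2 k).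
Proof.
apply: Stone_fin; exists 2.
exists (fun ab : K2 k => [ffun i : 'I_2 => if i == ord0 then ab.1 else ab.2]).
have i01 (i : 'I_2) : i = ord0 \/ i = ord_max.
  case: i => [[|[|m]] hm]; [left|right|by []]; exact: val_inj.
split.
- exists (fun f : {ffun 'I_2 -> k} => (f ord0, f ord_max)).
    by case=> a b /=; rewrite !ffunE /=.
  move=> f; apply/ffunP => i; rewrite ffunE /=.
  by case: (i01 i) => ->.
- by move=> x y; apply/ffunP => i; rewrite !ffunE; case: (i == ord0).
- by move=> x y; apply/ffunP => i; rewrite !ffunE; case: (i == ord0).
- by apply/ffunP => i; rewrite !ffunE; case: (i == ord0).
- by move=> c; apply/ffunP => i; rewrite !ffunE; case: (i == ord0).
Qed.

Definition me (k : fieldType) (B : kalg k) (e : B) : K2 k -> B :=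
  fun ab => kstr B ab.1 * e + kstr B ab.2 * (1 - e).

Lemma me_hom (k : fieldType) (B : kalg k) (e : B) : idem e -> kalg_hom (me e).
Proof.
rewrite /idem => he; split.
- by move=> [a b] [c d]; rewrite /me /= !rmorphD; ring.
- move=> [a b] [c d]; rewrite /me /= !rmorphM.
  have -> : (kstr B a * e + kstr B b * (1 - e)) * (kstr B c * e + kstr B d * (1 - e)) =
    kstr B a * kstr B c * (e * e) + kstr B b * kstr B d * (1 - e *+ 2 + e * e)
    + (kstr B a * kstr B d + kstr B b * kstr B c) * (e - e * e) by ring.
  by rewrite he; ring.
- by rewrite /me /= rmorph1 !mul1r subrKC.
- by move=> c; rewrite /me /= -mulrDr subrKC mulr1.
Qed.

Lemma me_10 (k : fieldType) (B : kalg k) (e : B) : me e (1, 0) = e.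
Proof. by rewrite /me /= rmorph1 rmorph0 mul1r mul0r addr0. Qed.

Lemma hom_me (k : fieldType) (B A : kalg k) (f : B -> A) (e : B) :
  kalg_hom f -> forall x, f (me e x) = me (f e) x.
Proof.
move=> hf [a b]; have [hD hM h1 hk] := hf.
by rewrite /me /= hD !hM !hk (homB _ _ hf) h1.
Qed.

Lemma idem_lift (k : fieldType) (A P : kalg k) (eps : P -> A) :
  is_pearl eps -> forall e : A, idem e -> exists e' : P, idem e' /\ eps e' = e.
Proof.
case=> _ he univ e ie.
have [psi [hpsi hc _]] := univ _ (me e) (K2_stone k) (me_hom ie).
exists (psi (1, 0)); split; last by rewrite hc me_10.
apply: hom_idem hpsi _; rewrite /idem; change (((1 : k) * 1, (0 : k) * 0) = (1, 0 : k)); by rewrite mulr1 mul0r.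
Qed.

Lemma idem_inj (k : fieldType) (A P : kalg k) (eps : P -> A) :
  is_pearl eps -> forall e1 e2 : P, idem e1 -> idem e2 -> eps e1 = eps e2 -> e1 = e2.
Proof.
case=> _ he univ e1 e2 i1 i2 ee.
have ie : idem (eps e1) by apply: hom_idem.
have [psi [hpsi hc uq]] := univ _ (me (eps e1)) (K2_stone k) (me_hom ie).
have u1 := uq _ (me_hom i1) (fun x => @hom_me _ _ _ _ e1 he x).
have u2 := uq _ (me_hom i2) (fun x => ltac:(by rewrite (@hom_me _ _ _ _ e2 he) -ee)).
by rewrite -(me_10 e1) -(me_10 e2) u1 u2.
Qed.


Lemma kstr_notin (k : fieldType) (B : kalg k) (p : set B) (c : k) :
  prime_ideal p -> p (kstr B c) -> c = 0.
Proof.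
move=> hp pc; apply: contrapT => /eqP c0; apply: (pi_1 hp).
have -> : (1 : B) = kstr B (c^-1) * kstr B c by rewrite -rmorphM mulVf // rmorph1.
exact: (pi_M hp).
Qed.

Lemma spec_ext (k : fieldType) (B : kalg k) (p1 p2 : Spec B) :
  (forall x : B, combI x) -> (forall e, idem e -> sval p1 e -> sval p2 e) -> p1 = p2.
Proof.
move=> hc h12.
have hp1 := proj2_sig p1; have hp2 := proj2_sig p2.
have h21 e : idem e -> sval p2 e -> sval p1 e.
  move=> ie p2e; apply: contrapT => n1.
  have [[//|q1] _] := prime_idem hp1 ie.
  have [_ []] := prime_idem hp2 ie; split => //; exact: h12 (idemC ie) q1.
have key x : combI x -> exists c, sval p1 (x - kstr B c) /\ sval p2 (x - kstr B c).
  elim=> [|d e x' ie _ [c [h1 h2]]].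
    by exists 0; rewrite rmorph0 subrr; split; apply: pi_0.
  have [[p1e|p1e'] _] := prime_idem hp1 ie.
    exists c; rewrite -addrA; split; apply: idD; (try by apply: prime_ideal_ideal) => //.
    + by apply: (pi_M hp1).
    + by apply: (pi_M hp2); apply: h12.
  exists (d + c).
  have -> : kstr B d * e + x' - kstr B (d + c) = (- kstr B d) * (1 - e) + (x' - kstr B c).
    by rewrite rmorphD; ring.
  split; apply: idD; (try by apply: prime_ideal_ideal) => //.
  + by apply: (pi_M hp1).
  + by apply: (pi_M hp2); apply: h12 => //; apply: idemC.
have eqs : sval p1 = sval p2.
  apply/seteqP; split => x hx; have [c [h1 h2]] := key x (hc x).
  - have : sval p1 (kstr B c).
      have -> : kstr B c = x - (x - kstr B c) by ring.
      exact: (pi_B hp1).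
    move/(kstr_notin hp1) => c0; rewrite c0 rmorph0 subr0 in h2; exact: h2.
  - have : sval p2 (kstr B c).
      have -> : kstr B c = x - (x - kstr B c) by ring.
      exact: (pi_B hp2).
    move/(kstr_notin hp2) => c0; rewrite c0 rmorph0 subr0 in h1; exact: h1.
move: hp1 hp2 h12 h21 key; case: p1 eqs => s1 h1; case: p2 => s2 h2 /= eqs.
by move=> *; apply: eq_exist.
Qed.

Lemma preim_prime (k : fieldType) (B A : kalg k) (f : B -> A) (q : set A) :
  kalg_hom f -> prime_ideal q -> prime_ideal (f @^-1` q).
Proof.
move=> hf hq; have [hD hM h1 _] := hf; split.
- by rewrite /preimage /= (hom0 hf); apply: (pi_0 hq).
- by move=> x y qx qy; rewrite /preimage /= (homB _ _ hf); apply: (pi_B hq).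
- by move=> a x qx; rewrite /preimage /= hM; apply: (pi_M hq).
- by rewrite /preimage /= h1; apply: (pi_1 hq).
- by move=> x y; rewrite /preimage /= hM; apply: (pi_P hq).
Qed.

Definition specmap (k : fieldType) (B A : kalg k) (f : B -> A) (hf : kalg_hom f) (q : Spec A) : Spec B :=
  exist _ (f @^-1` sval q) (preim_prime hf (proj2_sig q)).

Lemma fmap_cont (k : fieldType) (B A : kalg k) (f : B -> A) (hf : kalg_hom f) :
  continuous (specmap hf).
Proof.
apply/continuousP => U /open_zopen [S ->].
exists (f @` S); apply/seteqP; split => q /=.
- by move=> h1 h2; apply: h1 => y Sy; apply: h2; exists y.
- by move=> h1 h2; apply: h1 => y [x Sx <-]; apply: h2.
Qed.


Lemma spec_sep (k : fieldType) (B : kalg k) (x y : Spec B) :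
  (forall z : B, combI z) -> x <> y -> exists e, [/\ idem e, sval x e & ~ sval y e].
Proof.
move=> hc nxy; apply: contrapT => h; apply: nxy; apply: spec_ext => // e ie xe.
by apply: contrapT => ye; apply: h; exists e.
Qed.

Definition Vset (R : comPzRingType) (e : R) : set (Spec R) := [set r | sval r e].

Lemma Vset_open (R : comPzRingType) (e : R) : idem e -> open (Vset e).
Proof.
move=> ie; exists [set 1 - e]; apply/seteqP; split => r /=.
- move=> re h; have [_ []] := prime_idem (proj2_sig r) ie; split => //; exact: h.
- move=> h; have [[//|r1] _] := prime_idem (proj2_sig r) ie.
  by exfalso; apply: h => z ->.
Qed.

Lemma Vset_closed (R : comPzRingType) (e : R) : idem e -> closed (Vset e).
Proof.
move=> ie; rewrite -openC; exists [set e]; apply/seteqP; split => r /=.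
- by move=> nre h; apply: nre; apply: h.
- by move=> h re; apply: h => z ->.
Qed.

Lemma spec_connected_eq (k : fieldType) (B : kalg k) (C : set (Spec B)) (x y : Spec B) :
  (forall z : B, combI z) -> connected C -> C x -> C y -> x = y.
Proof.
move=> hc cC Cx Cy; apply: contrapT => nxy.
have [e [ie xe ye]] := spec_sep hc nxy.
have e1 : C `&` Vset e = C.
  apply: cC; [by exists x | by exists (Vset e) => //; apply: Vset_open
           | by exists (Vset e) => //; apply: Vset_closed].
have : (C `&` Vset e) y by rewrite e1.
by case.
Qed.

Lemma spec_hausdorff (k : fieldType) (B : kalg k) :
  (forall z : B, combI z) -> hausdorff_space (Spec B).
Proof.
move=> hc; rewrite open_hausdorff => x y /eqP nxy.
have [e [ie xe ye]] := spec_sep hc nxy.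
exists (Vset e, Vset (1 - e)); first split; rewrite /= ?inE //.
  by have [[//|]] := prime_idem (proj2_sig y) ie.
split; [exact: Vset_open|exact/Vset_open/idemC|].
apply/seteqP; split => // r [re r1e].
by have [_ []] := prime_idem (proj2_sig r) ie.
Qed.


Lemma idem_join (R : comPzRingType) (e f : R) : idem e -> idem f -> idem (e + f - e * f).
Proof.
rewrite /idem => he hf.
have -> : (e + f - e * f) * (e + f - e * f) =
  e * e + f * f + (e * e) * (f * f) + (e * f) *+ 2 - ((e * e) * f) *+ 2 - (e * (f * f)) *+ 2 by ring.
rewrite he hf; ring.
Qed.

Lemma prime_join (R : comPzRingType) (p : set R) (e f : R) : prime_ideal p -> p e -> p f -> p (e + f - e * f).
Proof.
move=> hp pe pf; have ip := prime_ideal_ideal hp.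
apply: (idB ip); [exact: idD | exact: idM].
Qed.

Lemma pearl_surj (k : fieldType) (A P : kalg k) (eps : P -> A) (hp : is_pearl eps)
  (he : kalg_hom eps) : forall p : Spec P, exists q : Spec A, @specmap _ _ _ eps he q = p.
Proof.
move=> p.
have hc : forall x : P, combI x by case: hp => sP _ _; apply: stone_comb.
have pp := proj2_sig p.
pose S := eps @` Iset p.
have nS : ~ gen S 1.
  move=> g1.
  have iJ : ideal (idJ S).
    apply: idJ_ideal.
    - by exists 0; [split; [apply: idem0|apply: (pi_0 pp)]|apply: hom0].
    - move=> _ _ [e [ie pe] <-] [f [if_ pf] <-]; exists (e + f - e * f).
        by split; [apply: idem_join|apply: prime_join].
      have [hD hM _ _] := he; by rewrite (homB _ _ he) hD hM.
    - by move=> _ [e [ie pe] <-]; apply: hom_idem.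
  have [_ [[e [ie pe] <-] e1]] : idJ S 1.
    by apply: g1 => // z Sz; exists z; split => //; case: Sz => e [ie _] <-; apply: hom_idem.
  rewrite mul1r in e1.
  have : e = 1.
    apply: (idem_inj hp) => //; [exact: idem1|].
    by have [_ _ -> _] := he.
  by move=> e1'; apply: (pi_1 pp); rewrite -e1'.
have [q [Sq _]] : exists q : Spec A, S `<=` sval q /\ ~ sval q 1.
  by apply: Krull => n; rewrite expr1n.
exists q; apply: spec_ext => // e ie /= qe.
apply: contrapT => npe.
have [[//|p1e] _] := prime_idem pp ie.
have q1e : sval q (eps (1 - e)) by apply: Sq; exists (1 - e) => //; split => //; apply: idemC.
have qq := proj2_sig q.
apply: (pi_1 qq).
have -> : (1 : A) = eps (1 - e) + eps e.
  by have [hD _ h1 _] := he; rewrite -hD subrK h1.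
by apply: idD => //; apply: prime_ideal_ideal.
Qed.

Lemma pearl_fiber_comp (k : fieldType) (A P : kalg k) (eps : P -> A) (hp : is_pearl eps)
  (he : kalg_hom eps) (q q' : Spec A) :
  @specmap _ _ _ eps he q = @specmap _ _ _ eps he q' -> connected_component setT q q'.
Proof.
move=> fq.
have Zq' : Zset q q'.
  move=> e [ie qe].
  have [e0 [i0 ee]] := idem_lift hp ie; rewrite -ee in qe *.
  have h : sval (@specmap _ _ _ eps he q) e0 := qe.
  by rewrite fq in h.
apply: (connected_component_max (B := Zset q)) => //.
- by move=> e [].
- exact: Zset_connected.
Qed.

Lemma pearl_comp_fiber (k : fieldType) (A P : kalg k) (eps : P -> A) (hp : is_pearl eps)
  (he : kalg_hom eps) (q q' : Spec A) :
  connected_component setT q q' -> @specmap _ _ _ eps he q = @specmap _ _ _ eps he q'.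
Proof.
move=> cq.
have hc : forall x : P, combI x by case: hp => sP _ _; apply: stone_comb.
have cC := @connected_continuous_connected _ _ (connected_component setT q) _
  (@component_connected _ setT q) (continuous_subspaceT (@fmap_cont _ _ _ _ he)).
have Cx : (specmap he @` connected_component setT q) (specmap he q).
  by exists q => //; exact: (@connected_component_refl _ setT q I).
have Cy : (specmap he @` connected_component setT q) (specmap he q') by exists q'.
exact: (spec_connected_eq hc cC Cx Cy).
Qed.


Local Open Scope quotient_scope.
Lemma pi0_reprK (T : topologicalType) (z : pi0 T) : pi0_proj (repr z) = z.
Proof. exact: reprK. Qed.

Lemma pi0_eq (T : topologicalType) (x y : T) :
  pi0_proj x = pi0_proj y <-> connected_component setT x y.
Proof.
split.
- by move/eqquotP => /asboolP.
- by move=> h; apply/eqquotP; apply/asboolP.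
Qed.

Lemma pi0_cont (T : topologicalType) : continuous (@pi0_proj T).
Proof. exact: pi_continuous. Qed.

Lemma pi0_contP (T U : topologicalType) (h : pi0 T -> U) :
  continuous (h \o @pi0_proj T) -> continuous h.
Proof. by move=> hc; apply/quotient_continuous. Qed.

Unset Implicit Arguments.

Theorem proposition1p12 (k : fieldType) (A P : kalg k) (eps : P -> A) :
  is_pearl eps ->
  profinite (pi0 (Spec A)) /\
  exists h : pi0 (Spec A) -> Spec P,
    (forall q : Spec A, proj1_sig (h (pi0_proj q)) = eps @^-1` proj1_sig q) /\
    homeomorphism h.
Proof.
move=> hp.
have he : kalg_hom eps by case: hp.
have hc : forall x : P, combI x by case: hp => sP _ _; apply: stone_comb.
pose f := @specmap _ _ _ eps he.
have fc : continuous f := @fmap_cont _ _ _ _ he.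
have HP := spec_hausdorff hc.
pose h := fun z : pi0 (Spec A) => f (repr z).
have hpi q : h (pi0_proj q) = f q.
  rewrite /h /f; apply: (@pearl_comp_fiber _ _ _ _ hp he).
  apply/pi0_eq; by rewrite pi0_reprK.
have /choice [s hs] : forall p : Spec P, exists q, f q = p := pearl_surj hp he.
pose g := fun p : Spec P => pi0_proj (s p).
have gh : cancel h g.
  move=> z; rewrite /g -[RHS]pi0_reprK; apply/pi0_eq.
  apply: (@pearl_fiber_comp _ _ _ _ hp he (s (h z)) (repr z)); rewrite -/f hs //.
have hg : cancel g h by move=> p; rewrite /g hpi hs.
have hcont : continuous h.
  apply: pi0_contP.
  have -> : h \o @pi0_proj _ = f by apply: funext => q /=; rewrite hpi.
  exact: fc.
have Qc : compact [set: pi0 (Spec A)].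
  have -> : [set: pi0 (Spec A)] = @pi0_proj _ @` [set: Spec A].
    apply/seteqP; split => // z _; exists (repr z) => //; exact: pi0_reprK.
  apply: continuous_compact; last exact: Spec_compact.
  exact: continuous_subspaceT (@pi0_cont _).
have gcont : continuous g.
  apply/continuousP => U oU.
  have -> : g @^-1` U = ~` (h @` (~` U)).
    apply/seteqP; split => x /=.
    - by move=> Ugx [z nUz hzx]; apply: nUz; rewrite -(gh z) hzx.
    - move=> nh; apply: contrapT => nU; apply: nh; exists (g x) => //.
  rewrite openC; apply: compact_closed => //.
  apply: continuous_compact; first exact: continuous_subspaceT.
  apply: (subclosed_compact _ Qc) => //.
  by rewrite closedC.
have hinj : injective h := can_inj gh.
split; last first.
  exists h; split; first by move=> q; rewrite hpi.
  by split => //; exists g.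
split => //.
- rewrite open_hausdorff => x y nxy.
  have nh : h x != h y by apply: contraNneq nxy => /hinj ->.
  move: HP; rewrite open_hausdorff => /(_ _ _ nh) [[U V] /= [hU hV] [oU oV UV]].
  exists (h @^-1` U, h @^-1` V) => /=.
    by split; rewrite inE; [move: hU|move: hV]; rewrite inE.
  split; [exact: (proj1 (continuousP _) hcont)|exact: (proj1 (continuousP _) hcont)|].
  apply/eqP; apply/seteqP; split => // z [Uz Vz].
  by move/eqP: UV => UV; have : (U `&` V) (h z) by []; rewrite UV.
- move=> x _; apply/seteqP; split => y; last by move=> ->; exact: (@connected_component_refl _ setT x I).
  move=> cxy.
  have cC := @connected_continuous_connected _ _ (connected_component setT x) _
    (@component_connected _ setT x) (continuous_subspaceT hcont).
  apply: hinj; apply: (spec_connected_eq hc cC).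
  + by exists y.
  + by exists x => //; exact: (@connected_component_refl _ setT x I).
Qed.
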